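(* In Model B$_K$ below, assume $l\to\infty$ and $lp\to0$ as $d\to\infty$. Then for the $c$-segmentation rule with $c=d/l$, $$\mathbb{P}(w\text{ is misclassified})\to0\quad\text{as }d\to\infty.$$
   Context: Segmentation rule. Let $d,c$ be positive integers with $c\mid d$. For $x\in\mathbb{R}^d$ and $1\le j\le c$ let $x_j\in\mathbb{R}^{d/c}$ denote its $j$-th block $(x_{(j-1)d/c+1},\dots,x_{jd/c})$, so that $x=x_1\circ\cdots\circ x_c$ (concatenation). Given dictionary words $w^1,\dots,w^K\in\mathbb{R}^d$ ($w^k$ representing class $k$) and a test word $w\in\mathbb{R}^d$, for each $j$ let $U_j\in\{1,\dots,K\}$ be an index $k$ minimizing the Euclidean distance $\|w_j-w^k_j\|$ in $\mathbb{R}^{d/c}$, chosen uniformly at random among all minimizers (independently of everything else). The $c$-segmentation rule assigns to $w$ the class $\chi(w)\in\operatorname{argmax}_k\#\{j:U_j=k\}$, chosen uniformly at random among all maximizers. The case $c=1$ is the Euclidean (nearest-neighbour) rule and $c=d$ is coordinate-by-coordinate comparison. $w$ is classified correctly if $\chi(w)$ equals its true class, misclassified otherwise. Probabilities are over all random objects including tie-breaks. Model B$_K$. Let $d\ge1$, an integer $l\ge1$ with $l\mid d$, $N>0$, $p\in(0,1)$ (possibly depending on $d$) and a fixed integer $2\le K\le l+1$ be given. Split $\{1,\dots,d\}$ into the $d/l$ consecutive blocks $B_t=\{(t-1)l+1,\dots,tl\}$. Let $m_1=0\in\mathbb{R}^d$ and, for $k=2,\dots,K$, let $m_k\in\{0,1\}^d$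 be such that in every block $B_t$ exactly one coordinate of $m_k$ equals $1$ and all others equal $0$, the position of this $1$ inside $B_t$ being different for different $k$. Let $Y^{(0)},Y^{(1)},\dots,Y^{(K)}$ be independent random vectors in $\mathbb{R}^d$, each with i.i.d. coordinates satisfying $\mathbb{P}(Y_i=N)=p$, $\mathbb{P}(Y_i=0)=1-p$. The dictionary words are $w^k=m_k+Y^{(k)}$ (class $k$), $k=1,\dots,K$, and the test word is $w=m_1+Y^{(0)}$ (true class 1). *)

(* Defs.v *)
From HB Require Import structures.
From mathcomp Require Import all_boot all_order all_algebra.
Unset Strict Implicit. Unset Printing Implicit Defensive.
Import Order.TTheory GRing.Theory Num.Theory.
Local Open Scope ring_scope.

(* Coordinates and blocks are 0-based: coordinate i : 'I_d lies in segment
   j = i %/ (d %/ c) (segments of length d/c). Classes are indexed by 'I_K,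
   class "1" of the paper being the index with value 0. *)

Definition block_of (d c : nat) (i : nat) : nat := (i %/ (d %/ c))%N.

Definition seg_dist (R : rcfType) (d c : nat) (j : nat) (x y : 'I_d -> R) : R :=
  Num.sqrt (\sum_(i : 'I_d | block_of d c i == j) (x i - y i) ^+ 2).

Definition nearest_set (R : rcfType) (d c K : nat) (ws : 'I_K -> 'I_d -> R)
    (w : 'I_d -> R) (j : 'I_c) : {set 'I_K} :=
  [set k | [forall k', seg_dist R d c j w (ws k) <= seg_dist R d c j w (ws k')]].

Definition vote_count (c K : nat) (u : {ffun 'I_c -> 'I_K}) (k : 'I_K) : nat :=
  #|[set j | u j == k]|.

Definition winners (c K : nat) (u : {ffun 'I_c -> 'I_K}) : {set 'I_K} :=
  [set k | [forall k', (vote_count c K u k' <= vote_count c K u k)%N]].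

(* Probability of the vote vector u = (U_1,...,U_c) under independent uniform
   tie-breaking among the minimizers on each segment. *)
Definition tiebreak_weight (R : rcfType) (d c K : nat) (ws : 'I_K -> 'I_d -> R)
    (w : 'I_d -> R) (u : {ffun 'I_c -> 'I_K}) : R :=
  \prod_(j : 'I_c)
     (if u j \in nearest_set R d c K ws w j then (#|nearest_set R d c K ws w j|%:R)^-1 else 0).

(* Conditional probability (given u) that the uniformly chosen maximizer is
   the true class (the class with index value 0). *)
Definition correct_given (R : rcfType) (c K : nat) (u : {ffun 'I_c -> 'I_K}) : R :=
  if [exists k in winners c K u, val k == 0%N] then (#|winners c K u|%:R)^-1 else 0.

Definition seg_misclass_prob (R : rcfType) (d c K : nat)
    (ws : 'I_K -> 'I_d -> R) (w : 'I_d -> R) : R :=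
  \sum_(u : {ffun 'I_c -> 'I_K})
     tiebreak_weight R d c K ws w u * (1 - correct_given R c K u).

Definition modelB_means (R : rcfType) (d l K : nat) (m : 'I_K -> 'I_d -> R) : Prop :=
  [/\ (forall k i, val k = 0%N -> m k i = 0),
      (forall k i, (0 < val k)%N -> m k i = 0 \/ m k i = 1),
      (forall k t, (0 < val k)%N -> (t < d %/ l)%N ->
          #|[set i : 'I_d | (i %/ l == t)%N && (m k i == 1)]| = 1%N)
    & (forall k k' i, (0 < val k)%N -> (0 < val k')%N -> k != k' ->
          m k i = 1 -> m k' i = 0)].

(* Noise configuration: Y (a, i) = true iff Y^(a)_i = N, for a = 0..K
   (a = 0: test word; a = k+1: dictionary word of class index k). *)
Definition noise_weight (R : rcfType) (K d : nat) (p : R)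
    (Y : {ffun 'I_K.+1 * 'I_d -> bool}) : R :=
  \prod_(x : 'I_K.+1 * 'I_d) (if Y x then p else 1 - p).

Definition dict_word (R : rcfType) (K d : nat) (N : R) (m : 'I_K -> 'I_d -> R)
    (Y : {ffun 'I_K.+1 * 'I_d -> bool}) (k : 'I_K) : 'I_d -> R :=
  fun i => m k i + (if Y (lift ord0 k, i) then N else 0).

(* test word w = m_1 + Y^(0) with m_1 = 0 *)
Definition test_word (R : rcfType) (K d : nat) (N : R)
    (Y : {ffun 'I_K.+1 * 'I_d -> bool}) : 'I_d -> R :=
  fun i => if Y (ord0, i) then N else 0.

Definition modelB_misclass_prob (R : rcfType) (d l K : nat) (N p : R)
    (m : 'I_K -> 'I_d -> R) : R :=
  \sum_(Y : {ffun 'I_K.+1 * 'I_d -> bool})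
     noise_weight R K d p Y * seg_misclass_prob R d (d %/ l) K (dict_word R K d N m Y) (test_word R K d N Y).

(* Main.v *)
Require Import Defs.
From HB Require Import structures.
From mathcomp Require Import all_boot all_order all_algebra.
Import Order.TTheory GRing.Theory Num.Theory.
Local Open Scope ring_scope.

Lemma sum_ffun_prod (R : comRingType) (I J : finType) (F : I -> J -> R) :
  \sum_(f : {ffun I -> J}) \prod_i F i (f i) = \prod_i \sum_j F i j.
Proof. by rewrite bigA_distr_bigA. Qed.

Lemma nw_ge0 (R : rcfType) K d (p : R) Y : 0 <= p <= 1 -> 0 <= noise_weight R K d p Y.
Proof.
move=> /andP[p0 p1]; apply: prodr_ge0 => x _; case: (Y x) => //; by rewrite subr_ge0.
Qed.

Lemma nw_marg (R : rcfType) K d (p : R) x0 :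
  \sum_Y noise_weight R K d p Y * (Y x0)%:R = p.
Proof.
pose g := fun (x : 'I_K.+1 * 'I_d) (b : bool) =>
  if x == x0 then (if b then p else 0) else (if b then p else 1 - p).
transitivity (\sum_(Y : {ffun 'I_K.+1 * 'I_d -> bool}) \prod_x g x (Y x)).
  apply: eq_bigr => Y _; rewrite /noise_weight (bigD1 x0) //= [RHS](bigD1 x0) //=.
  rewrite /g eqxx; rewrite mulrAC; congr (_ * _).
    by case: (Y x0); rewrite ?mulr1 ?mulr0.
  by apply: eq_bigr => x /negbTE ->.
rewrite sum_ffun_prod (bigD1 x0) //= [X in _ * X]big1 ?mulr1.
  by rewrite big_bool /g eqxx /= addr0.
by move=> x /negbTE xn; rewrite big_bool /g xn /= addrC subrK.
Qed.

Lemma inv_nat_le1 (R : rcfType) (n : nat) : 0 <= (n%:R : R)^-1 <= 1.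
Proof.
rewrite invr_ge0 ler0n /=; case: n => [|n]; first by rewrite invr0 ler01.
by rewrite invf_le1 ?ltr0Sn // ler1n.
Qed.

Lemma tw_ge0 (R : rcfType) d c K ws w u : 0 <= tiebreak_weight R d c K ws w u.
Proof.
apply: prodr_ge0 => j _; case: ifP => // _; by case/andP: (inv_nat_le1 R #|nearest_set R d c K ws w j|).
Qed.

Lemma tw_sum_le1 (R : rcfType) d c K ws w :
  \sum_u tiebreak_weight R d c K ws w u <= 1.
Proof.
rewrite /tiebreak_weight.
rewrite (@sum_ffun_prod _ _ _ (fun j k => if k \in nearest_set R d c K ws w j then (#|nearest_set R d c K ws w j|%:R)^-1 else 0 : R)).
apply: prodr_ile1 => j _; set S := nearest_set _ _ _ _ _ _ j.
rewrite -big_mkcond /= sumr_const; apply/andP; split.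
  by rewrite mulrn_wge0 // invr_ge0 ler0n.
case: #|S| => [|n]; first by rewrite mulr0n.
set x := (n.+1%:R : R); have hx : x != 0 by rewrite pnatr_eq0.
by rewrite -mulr_natr -/x mulVf.
Qed.

Lemma cg_bounds (R : rcfType) c K u : 0 <= correct_given R c K u <= 1.
Proof. rewrite /correct_given; case: ifP => _; [exact: inv_nat_le1 | by rewrite lexx ler01]. Qed.

Lemma smp_bounds (R : rcfType) d c K ws w : 0 <= seg_misclass_prob R d c K ws w <= 1.
Proof.
apply/andP; split.
  apply: sumr_ge0 => u _; apply: mulr_ge0; first exact: tw_ge0.
  by case/andP: (cg_bounds R c K u) => _; rewrite subr_ge0.
apply: le_trans (tw_sum_le1 R d c K ws w); apply: ler_sum => u _.
rewrite -[X in _ <= X]mulr1; apply: ler_wpM2l; first exact: tw_ge0.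
by case/andP: (cg_bounds R c K u) => h _; rewrite lerBlDr lerDl.
Qed.

Lemma div_div (d l : nat) : (0 < d)%N -> (0 < l)%N -> (l %| d)%N -> (d %/ (d %/ l))%N = l.
Proof.
move=> d0 l0 ld; have q0 : (0 < d %/ l)%N by rewrite divn_gt0 // dvdn_leq.
by rewrite -{1}(divnK ld) mulKn.
Qed.

Definition clean (K d l c : nat) (Y : {ffun 'I_K.+1 * 'I_d -> bool}) (j : 'I_c) : bool :=
  [forall x : 'I_K.+1 * 'I_d, (x.2 %/ l == j)%N ==> ~~ Y x].

Lemma seg_clean (R : rcfType) K d l (N : R) m (Y : {ffun 'I_K.+1 * 'I_d -> bool})
  (k0 : 'I_K) (j : 'I_(d %/ l)) :
  (0 < d)%N -> (0 < l)%N -> (l %| d)%N -> modelB_means R d l K m -> val k0 = 0%N ->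
  clean K d l (d %/ l) Y j ->
  nearest_set R d (d %/ l) K (dict_word R K d N m Y) (test_word R K d N Y) j = [set k0].
Proof.
move=> d0 l0 ld [m0 m01 m1 mdis] k00 /forallP cl.
have blk i : block_of d (d %/ l) i = (i %/ l)%N by rewrite /block_of div_div.
have Yf a (i : 'I_d) : (i %/ l == j)%N -> Y (a, i) = false.
  by move=> h; move: (cl (a, i)); rewrite /= h /= => /negbTE.
have dist0 : seg_dist R d (d %/ l) j (test_word R K d N Y) (dict_word R K d N m Y k0) = 0.
  rewrite /seg_dist big1 ?sqrtr0 // => i; rewrite blk => h.
  by rewrite /test_word /dict_word !Yf // m0 // addr0 subr0 expr0n.
have distp k : (0 < val k)%N ->
    0 < seg_dist R d (d %/ l) j (test_word R K d N Y) (dict_word R K d N m Y k).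
  move=> kp; have : (0 < #|[set i : 'I_d | (i %/ l == j)%N && (m k i == 1%R)]|)%N.
    by rewrite m1.
  case/card_gt0P => i; rewrite inE => /andP[hij /eqP hm].
  rewrite /seg_dist sqrtr_gt0 (bigD1 i) /=; last by rewrite blk.
  rewrite /test_word /dict_word !Yf // hm addr0 sub0r sqrrN expr1n.
  apply: (lt_le_trans ltr01); rewrite lerDl; apply: sumr_ge0 => i' _; exact: sqr_ge0.
apply/setP => k; rewrite in_set1 inE.
have [->|kn] := eqVneq k k0.
  by apply/forallP => k'; rewrite dist0 sqrtr_ge0.
apply/negbTE/negP => /forallP /(_ k0); rewrite dist0.
have kp : (0 < val k)%N.
  by rewrite lt0n; apply: contra kn => /eqP h; apply/eqP/val_inj; rewrite /= h k00.
by rewrite leNgt distp.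
Qed.

From mathcomp Require Import zify ring lra.

Lemma noisy_le K d l c (Y : {ffun 'I_K.+1 * 'I_d -> bool}) : (0 < d)%N ->
  (#|[set j : 'I_c | ~~ clean K d l c Y j]| <= #|[set x | Y x]|)%N.
Proof.
move=> d0; set x0 : 'I_K.+1 * 'I_d := (ord0, Ordinal d0).
pose g (j : 'I_c) := odflt x0 [pick x | Y x && (x.2 %/ l == j)%N].
have gP j : ~~ clean K d l c Y j -> Y (g j) && (((g j).2 %/ l)%N == j).
  rewrite /clean negb_forall => /existsP [x hx].
  rewrite /g; case: pickP => [y hy //|/(_ x)].
  by move: hx; rewrite negb_imply negbK andbC => ->.
rewrite -(card_in_imset (f := g)); last first.
  move=> j1 j2; rewrite !inE => h1 h2 e.
  case/andP: (gP _ h1) => _ /eqP e1; case/andP: (gP _ h2) => _ /eqP e2.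
  by apply: val_inj; rewrite /= -e1 -e2 e.
apply: subset_leq_card; apply/subsetP => x /imsetP [j]; rewrite !inE => hj ->.
by case/andP: (gP _ hj).
Qed.

Lemma smp_good (R : rcfType) K d l (N : R) m (Y : {ffun 'I_K.+1 * 'I_d -> bool})
  (k0 : 'I_K) :
  (0 < d)%N -> (0 < l)%N -> (l %| d)%N -> modelB_means R d l K m -> val k0 = 0%N ->
  (2 * #|[set x | Y x]| < d %/ l)%N ->
  seg_misclass_prob R d (d %/ l) K (dict_word R K d N m Y) (test_word R K d N Y) = 0.
Proof.
move=> d0 l0 ld mB k00 small.
rewrite /seg_misclass_prob big1 // => u _.
set tw := tiebreak_weight _ _ _ _ _ _ u.
have [->|twn] := eqVneq tw 0; first by rewrite mul0r.
have uS j : u j \in nearest_set R d (d %/ l) K (dict_word R K d N m Y) (test_word R K d N Y) j.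
  apply/negPn/negP => hn; move/eqP: twn; apply.
  by rewrite /tw /tiebreak_weight (bigD1 j) //= (negbTE hn) mul0r.
have uc j : clean K d l (d %/ l) Y j -> u j = k0.
  by move=> cj; move: (uS j); rewrite (seg_clean R K d l N m Y k0 j) // => /set1P.
set c := (d %/ l)%N.
have hnc := @noisy_le K d l c Y d0.
set nz := #|[set j : 'I_c | ~~ clean K d l c Y j]| in hnc.
have ccard : (#|[set j : 'I_c | clean K d l c Y j]| + nz)%N = c.
  rewrite /nz -[X in _ = X]card_ord -(cardsC [set j : 'I_c | clean K d l c Y j]).
  congr (_ + _)%N; apply: eq_card => j; by rewrite !inE.
have vk0 : (#|[set j : 'I_c | clean K d l c Y j]| <= vote_count c K u k0)%N.
  apply: subset_leq_card; apply/subsetP => j; rewrite !inE => /uc ->; exact: eqxx.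
have vk k : k != k0 -> (vote_count c K u k <= nz)%N.
  move=> kn; apply: subset_leq_card; apply/subsetP => j; rewrite !inE => /eqP hj.
  by apply/negP => /uc; rewrite hj => e; rewrite e eqxx in kn.
have win : winners c K u = [set k0].
  apply/setP => k; rewrite inE in_set1.
  have [->|kn] := eqVneq k k0.
    apply/forallP => k'; have [->//|k'n] := eqVneq k' k0.
    have := vk _ k'n; lia.
  apply/negbTE/negP => /forallP /(_ k0); have := vk _ kn; lia.
rewrite /correct_given win.
have -> : [exists k in [set k0], val k == 0%N].
  by apply/existsP; exists k0; rewrite in_set1 eqxx k00.
by rewrite cards1 invr1 subrr mulr0.
Qed.

Lemma cardT_sum (R : rcfType) K d (Y : {ffun 'I_K.+1 * 'I_d -> bool}) :
  (#|[set x | Y x]|%:R : R) = \sum_x (Y x)%:R.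
Proof.
rewrite -sum1_card natr_sum big_mkcond /=; apply: eq_bigr => x _.
by rewrite inE; case: (Y x).
Qed.

Lemma misclass_bound (R : rcfType) K d l (N p : R) m (k0 : 'I_K) :
  (0 < d)%N -> (0 < l)%N -> (l %| d)%N -> 0 < p < 1 -> modelB_means R d l K m ->
  val k0 = 0%N ->
  0 <= modelB_misclass_prob R d l K N p m <= 2 * (K.+1)%:R * (l%:R * p).
Proof.
move=> d0 l0 ld /andP[p0 p1] mB k00.
have pb : 0 <= p <= 1 by rewrite (ltW p0) (ltW p1).
set c := (d %/ l)%N.
have c0 : (0 < c)%N by rewrite divn_gt0 // dvdn_leq.
have cR : (c%:R : R) != 0 by rewrite pnatr_eq0 -lt0n.
apply/andP; split.
  apply: sumr_ge0 => Y _; apply: mulr_ge0; first exact: nw_ge0.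
  by case/andP: (smp_bounds R d c K (dict_word R K d N m Y) (test_word R K d N Y)).
apply: (@le_trans _ _ (\sum_Y noise_weight R K d p Y * (2 / c%:R * \sum_x (Y x)%:R))).
  apply: ler_sum => Y _; apply: ler_wpM2l; first exact: nw_ge0.
  have rhs0 : 0 <= 2 / c%:R * \sum_x (Y x)%:R :> R.
    by apply: mulr_ge0; [apply: divr_ge0 | apply: sumr_ge0 => x _].
  have [sm|bg] := ltnP (2 * #|[set x | Y x]|) c.
    by rewrite (smp_good R K d l N m Y k0).
  case/andP: (smp_bounds R d c K (dict_word R K d N m Y) (test_word R K d N Y)) => _ h.
  apply: (le_trans h); rewrite -cardT_sum mulrAC ler_pdivlMr ?ltr0n // mul1r.
  by rewrite -natrM ler_nat.
under eq_bigr do rewrite mulrCA.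
rewrite -mulr_sumr; under eq_bigr do rewrite mulr_sumr.
rewrite exchange_big /= (eq_bigr (fun _ => p)); last by move=> x _; exact: nw_marg.
rewrite sumr_const card_prod !card_ord.
have dE : (d%:R : R) = c%:R * l%:R by rewrite -natrM /c divnK.
rewrite -[p *+ _]mulr_natr natrM dE.
rewrite le_eqVlt; apply/orP; left; apply/eqP; field.
exact: cR.
Qed.

Theorem proposition7 (R : rcfType) (K : nat) (d l : nat -> nat) (N p : nat -> R)
    (m : forall n : nat, 'I_K -> 'I_(d n) -> R) :
  (2 <= K)%N ->
  (forall n, (0 < d n)%N /\ (0 < l n)%N /\ (l n %| d n)%N) ->
  (forall n, (K <= l n + 1)%N) ->
  (forall n, 0 < N n) ->
  (forall n, 0 < p n < 1) ->
  (forall n, modelB_means R (d n) (l n) K (m n)) ->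
  (forall M : nat, exists n0, forall n, (n0 <= n)%N -> (M <= d n)%N) ->
  (forall M : nat, exists n0, forall n, (n0 <= n)%N -> (M <= l n)%N) ->
  (forall eps : R, 0 < eps ->
     exists n0, forall n, (n0 <= n)%N -> `|(l n)%:R * p n| < eps) ->
  forall eps : R, 0 < eps ->
    exists n0, forall n, (n0 <= n)%N ->
      `|modelB_misclass_prob R (d n) (l n) K (N n) (p n) (m n)| < eps.
Proof.
move=> K2 hdl _ _ hp hm _ _ hlp eps e0.
have K0 : (0 < K)%N by apply: leq_trans K2.
pose k0 : 'I_K := Ordinal K0.
have cK : 0 < 2 * (K.+1)%:R :> R by rewrite mulr_gt0 ?ltr0n.
have [n0 Hn0] := hlp (eps / (2 * (K.+1)%:R)) (divr_gt0 e0 cK).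
exists n0 => n /Hn0 h.
have [d0 [l0 ld]] := hdl n.
have /andP[b0 b1] := misclass_bound R K (d n) (l n) (N n) (p n) (m n) k0 d0 l0 ld (hp n) (hm n) erefl.
rewrite ger0_norm //; apply: (le_lt_trans b1).
have h' : (l n)%:R * p n < eps / (2 * K.+1%:R) := le_lt_trans (ler_norm _) h.
rewrite -ltr_pdivlMl //; move: h'; rewrite [eps / _]mulrC; exact.
Qed.
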